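(* Let $n \ge 1$ and let $N$ be a $\lambda$-term satisfying $N a_1 a_2 \ldots a_n =_\beta a_1 a_2 \ldots a_n (N a_1 a_2 \ldots a_n)$ (for variables $a_1,\ldots,a_n$ not free in $N$). Then $N\,I^{\,n-1}$ (i.e. $N$ applied to $n-1$ copies of $I$) is a fixed point combinator.
   Context: Untyped $\lambda$-calculus; $=_\beta$ is $\beta$-convertibility; $I = \lambda x.x$. A term $Y$ is a fixed point combinator if $Yx =_\beta x(Yx)$ for a variable $x$ not free in $Y$. $N\,I^{m}$ denotes the left-associated application $N I \cdots I$ with $m$ copies of $I$. *)

(* Defs.v *)
From Stdlib Require Import Arith List Relations.
Import ListNotations.

(* A free variable is a de Bruijn index that is not bound; at binder depth d,
   [Var (d + k)] denotes the free variable number k. *)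
Inductive term : Type :=
| Var : nat -> term
| App : term -> term -> term
| Lam : term -> term.

Fixpoint lift (k c : nat) (t : term) : term :=
  match t with
  | Var i => if i <? c then Var i else Var (i + k)
  | App a b => App (lift k c a) (lift k c b)
  | Lam a => Lam (lift k (S c) a)
  end.

Fixpoint subst (t : term) (j : nat) (u : term) : term :=
  match t with
  | Var i => if i <? j then Var i
             else if i =? j then lift j 0 u
             else Var (i - 1)
  | App a b => App (subst a j u) (subst b j u)
  | Lam a => Lam (subst a (S j) u)
  end.

Inductive beta : term -> term -> Prop :=
| beta_redex : forall M N, beta (App (Lam M) N) (subst M 0 N)
| beta_appl : forall M M' N, beta M M' -> beta (App M N) (App M' N)
| beta_appr : forall M N N', beta N N' -> beta (App M N) (App M N')
| beta_lam : forall M M', beta M M' -> beta (Lam M) (Lam M').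

Definition beta_conv : term -> term -> Prop := clos_refl_sym_trans term beta.

Fixpoint free (x : nat) (t : term) : Prop :=
  match t with
  | Var i => i = x
  | App a b => free x a \/ free x b
  | Lam a => free (S x) a
  end.

Definition I : term := Lam (Var 0).

Definition apps (t : term) (us : list term) : term := fold_left App us t.

Definition fpc (Y : term) : Prop :=
  forall x : nat, ~ free x Y -> beta_conv (App Y (Var x)) (App (Var x) (App Y (Var x))).

(* Main.v *)
Require Import Defs.
From Stdlib Require Import Arith List Relations Lia.
Import ListNotations.

Fixpoint sub_at (d : nat) (s : nat -> term) (t : term) : term :=
  match t with
  | Var i => if i <? d then Var i else lift d 0 (s (i - d))
  | App a b => App (sub_at d s a) (sub_at d s b)
  | Lam a => Lam (sub_at (S d) s a)
  end.

Lemma lift_lift : forall u k d c c', c' <= c -> c <= c' + d ->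
  lift k c (lift d c' u) = lift (d + k) c' u.
Proof.
  induction u; intros k d c c' H1 H2; simpl.
  - destruct (Nat.ltb_spec n c'); simpl.
    + destruct (Nat.ltb_spec n c); [reflexivity| lia].
    + destruct (Nat.ltb_spec (n + d) c); [lia|]. f_equal; lia.
  - rewrite IHu1, IHu2; auto.
  - rewrite IHu; auto; lia.
Qed.

Lemma lift0 : forall u c, lift 0 c u = u.
Proof.
  induction u; intros c; simpl.
  - destruct (n <? c); auto; rewrite Nat.add_0_r; auto.
  - rewrite IHu1, IHu2; auto.
  - rewrite IHu; auto.
Qed.

Lemma subst_lift : forall u m c j v, c <= j -> j <= c + m ->
  subst (lift (S m) c u) j v = lift m c u.
Proof.
  induction u; intros m c j v H1 H2; simpl.
  - destruct (Nat.ltb_spec n c); simpl.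
    + destruct (Nat.ltb_spec n j); [reflexivity|lia].
    + destruct (Nat.ltb_spec (n + S m) j); [lia|].
      destruct (Nat.eqb_spec (n + S m) j); [lia|]. f_equal; lia.
  - rewrite IHu1, IHu2; auto.
  - rewrite IHu; auto; lia.
Qed.

Lemma lift_sub : forall t s k c d, c <= d ->
  lift k c (sub_at d s t) = sub_at (d + k) s (lift k c t).
Proof.
  induction t; intros s k c d H; simpl.
  - destruct (Nat.ltb_spec n d); simpl.
    + destruct (Nat.ltb_spec n c); simpl.
      * destruct (Nat.ltb_spec n (d + k)); [reflexivity|lia].
      * destruct (Nat.ltb_spec (n + k) (d + k)); [reflexivity|lia].
    + destruct (Nat.ltb_spec n c); [lia|]. simpl.
      destruct (Nat.ltb_spec (n + k) (d + k)); [lia|].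
      rewrite lift_lift by lia. do 2 f_equal. lia.
  - rewrite IHt1, IHt2; auto.
  - rewrite IHt by lia. reflexivity.
Qed.

Lemma subst_sub : forall M s N k d,
  subst (sub_at (S (k + d)) s M) k (sub_at d s N) = sub_at (k + d) s (subst M k N).
Proof.
  induction M; intros s N k d; simpl.
  - destruct (Nat.ltb_spec n (S (k + d))); simpl.
    + destruct (Nat.ltb_spec n k); simpl.
      * destruct (Nat.ltb_spec n (k + d)); [reflexivity|lia].
      * destruct (Nat.eqb_spec n k).
        -- rewrite (lift_sub N s k 0 d) by lia. f_equal; lia.
        -- simpl. destruct (Nat.ltb_spec (n - 1) (k + d)); [reflexivity|lia].
    + rewrite subst_lift by lia.
      destruct (Nat.ltb_spec n k); [lia|].
      destruct (Nat.eqb_spec n k); [lia|]. simpl.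
      destruct (Nat.ltb_spec (n - 1) (k + d)); [lia|]. do 2 f_equal; lia.
  - rewrite IHM1, IHM2; auto.
  - f_equal. exact (IHM s N (S k) d).
Qed.

Lemma beta_sub : forall t t', beta t t' -> forall d s, beta (sub_at d s t) (sub_at d s t').
Proof.
  induction 1; intros d s; simpl.
  - pose proof (subst_sub M s N 0 d) as E. simpl in E. rewrite <- E. constructor.
  - apply beta_appl; auto.
  - apply beta_appr; auto.
  - apply beta_lam; auto.
Qed.

Lemma conv_sub : forall t t', beta_conv t t' -> forall s, beta_conv (sub_at 0 s t) (sub_at 0 s t').
Proof.
  induction 1; intros s.
  - apply rst_step, beta_sub; auto.
  - apply rst_refl.
  - apply rst_sym; apply IHclos_refl_sym_trans.
  - eapply rst_trans; [apply IHclos_refl_sym_trans1|apply IHclos_refl_sym_trans2].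
Qed.

Lemma conv_appl : forall t t' u, beta_conv t t' -> beta_conv (App t u) (App t' u).
Proof.
  induction 1.
  - apply rst_step, beta_appl; auto.
  - apply rst_refl.
  - apply rst_sym; apply IHclos_refl_sym_trans.
  - eapply rst_trans; [apply IHclos_refl_sym_trans1|apply IHclos_refl_sym_trans2].
Qed.

Lemma conv_apps : forall us t t', beta_conv t t' -> beta_conv (apps t us) (apps t' us).
Proof.
  induction us; intros t t' H; [exact H|].
  simpl. apply IHus, conv_appl; auto.
Qed.

Lemma sub_apps : forall us t s d,
  sub_at d s (apps t us) = apps (sub_at d s t) (map (sub_at d s) us).
Proof.
  induction us; intros t s d; simpl; [reflexivity|].
  unfold apps in *. simpl. rewrite IHus. reflexivity.
Qed.

Lemma sub_id : forall t d s, (forall i, d <= i -> free i t -> s (i - d) = Var (i - d)) ->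
  sub_at d s t = t.
Proof.
  induction t; intros d s H; simpl.
  - destruct (Nat.ltb_spec n d); auto.
    rewrite H by (simpl; auto). simpl. f_equal. lia.
  - rewrite IHt1, IHt2; auto; intros i Hi Hf; apply H; simpl; auto.
  - rewrite IHt; auto. intros i Hi Hf.
    replace (i - S d) with ((i - 1) - d) by lia.
    apply H; [lia|]. simpl. replace (S (i - 1)) with i by lia. auto.
Qed.

Fixpoint assign (l : list nat) (ts : list term) (a : nat) : term :=
  match l, ts with
  | a' :: l', t :: ts' => if a =? a' then t else assign l' ts' a
  | _, _ => Var a
  end.

Lemma assign_out : forall l ts a, ~ In a l -> assign l ts a = Var a.
Proof.
  induction l; intros ts b H; simpl; auto.
  destruct ts; auto.
  destruct (Nat.eqb_spec b a).
  - subst; exfalso; apply H; simpl; auto.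
  - apply IHl. intro; apply H; simpl; auto.
Qed.

Lemma assign_map : forall l ts, NoDup l -> length l = length ts ->
  map (assign l ts) l = ts.
Proof.
  induction l; intros ts Hd Hl; destruct ts; simpl in *; try discriminate; auto.
  inversion Hd; subst.
  rewrite Nat.eqb_refl. f_equal.
  transitivity (map (assign l ts) l); [|apply IHl; auto].
  apply map_ext_in. intros b Hb.
  destruct (Nat.eqb_spec b a); auto. subst; contradiction.
Qed.

Lemma free_apps : forall us t y, free y t -> free y (apps t us).
Proof.
  induction us; intros t y H; simpl; auto.
  apply IHus. simpl; auto.
Qed.

Lemma apps_I : forall k u, beta_conv (apps I (repeat I k ++ [u])) u.
Proof.
  induction k; intros u; simpl.
  - apply rst_step. replace u with (subst (Var 0) 0 u) at 2.
    + constructor.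
    + simpl. apply lift0.
  - eapply rst_trans; [|apply (IHk u)].
    apply conv_apps. apply rst_step.
    change (beta (App (Lam (Var 0)) I) (subst (Var 0) 0 I)). constructor.
Qed.

Theorem proposition5p1 (n : nat) (N : term) (x : nat) (rest : list nat)
  (hn : 1 <= n) (hlen : length (x :: rest) = n)
  (hdistinct : NoDup (x :: rest))
  (hfresh : forall a, In a (x :: rest) -> ~ free a N)
  (hN : beta_conv (apps N (map Var (x :: rest)))
                  (apps (Var x) (map Var rest ++ [apps N (map Var (x :: rest))]))) :
  fpc (apps N (repeat I (n - 1))).
Proof.
  intros y Hy.
  assert (HyN : ~ free y N) by (intro; apply Hy, free_apps; auto).
  set (ts := repeat I (n - 1) ++ [Var y]).
  set (s := assign (x :: rest) ts).
  assert (Hlen : length (x :: rest) = length ts).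
  { unfold ts. rewrite length_app, repeat_length. simpl in *. lia. }
  assert (Hmap : map s (x :: rest) = ts) by (apply assign_map; auto).
  assert (HsN : sub_at 0 s N = N).
  { apply sub_id. intros i _ Hf. rewrite Nat.sub_0_r. unfold s.
    apply assign_out. intro Hi. apply (hfresh i Hi Hf). }
  assert (Hvars : map (sub_at 0 s) (map Var (x :: rest)) = ts).
  { rewrite map_map. rewrite <- Hmap. apply map_ext. intro a. simpl. rewrite Nat.sub_0_r. apply lift0. }
  pose proof (conv_sub _ _ hN s) as H.
  assert (Hl : sub_at 0 s (apps N (map Var (x :: rest))) = apps N ts)
    by (rewrite sub_apps, HsN, Hvars; reflexivity).
  rewrite Hl, sub_apps, map_app in H.
  change (map (sub_at 0 s) [apps N (map Var (x :: rest))]) with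
    [sub_at 0 s (apps N (map Var (x :: rest)))] in H.
  rewrite Hl in H.
  assert (HY : apps N ts = App (apps N (repeat I (n - 1))) (Var y)).
  { unfold ts, apps. rewrite fold_left_app. reflexivity. }
  rewrite HY in H.
  eapply rst_trans; [exact H|].
  set (Y := App (apps N (repeat I (n - 1))) (Var y)) in *.
  assert (Hrest : sub_at 0 s (Var x) :: map (sub_at 0 s) (map Var rest) = ts).
  { rewrite <- Hvars. reflexivity. }
  simpl sub_at in Hrest. simpl sub_at.
  destruct (n - 1) as [|k] eqn:Hk.
  - simpl in Hrest. injection Hrest as E1 E2. rewrite E1, E2. simpl. apply rst_refl.
  - simpl in Hrest. injection Hrest as E1 E2. rewrite E1, E2.
    unfold apps. rewrite fold_left_app. simpl.
    apply conv_appl. apply apps_I.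
Qed.
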